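(* Let $\mathcal{G}^c=(\mathbb{C},\mathbb{E}^c)$ be a C-DMG, $\mathcal{G}$ a DMG compatible with it, $\mathbb{C}_A\subseteq\mathbb{C}$ a set of clusters and $A=\bigcup_{C\in\mathbb{C}_A}C$. Let $\mathcal{G}^c_{\overline{\mathbb{C}_A}}$ and $\mathcal{G}_{\overline{A}}$ be the graphs obtained by intervening on $\mathbb{C}_A$ in $\mathcal{G}^c$ and on $A$ in $\mathcal{G}$. Then $\mathcal{G}_{\overline{A}}$ is compatible with $\mathcal{G}^c_{\overline{\mathbb{C}_A}}$. Moreover, if $\mathcal{M}(\mathcal{G}^c)$ denotes the maximal compatible DMG of $\mathcal{G}^c$, then $\mathcal{M}(\mathcal{G}^c)_{\overline{A}}$ and $\mathcal{M}(\mathcal{G}^c_{\overline{\mathbb{C}_A}})$ are the same graph.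
   Context: A DMG has directed edges $\to$ and bidirected edges $\leftrightarrow$, cycles allowed. Given a graph $\mathcal{G}=(\mathbb{V},\mathbb{E})$ and a partition $\mathbb{C}$ of $\mathbb{V}$ into nonempty clusters, $\mathcal{G}$ is compatible with $\mathcal{G}^c=(\mathbb{C},\mathbb{E}^c)$ if for all $C_i,C_j\in\mathbb{C}$ (possibly equal), $C_i\to C_j$ (resp. $C_i\leftrightarrow C_j$) is in $\mathbb{E}^c$ iff there exist $V_i\in C_i,V_j\in C_j$ with $V_i\to V_j$ (resp. $V_i\leftrightarrow V_j$) in $\mathbb{E}$; a C-DMG is such a $\mathcal{G}^c$ for some DMG. Intervening on a vertex set $D$ in a graph means removing all directed edges whose head is in $D$ and all bidirected edges with an endpoint in $D$. The maximal compatible DMG $\mathcal{M}(\mathcal{G}^c)$ of a C-DMG $\mathcal{G}^c$ has vertex set $\bigcup_{C\in\mathbb{C}}C$, directed edges $V\to V'$ for all $V\in C,V'\in C'$ with $C\to C'\in\mathbb{E}^c$, and bidirected edges $V\leftrightarrow V'$ for all $V\in C,V'\in C'$ with $C\leftrightarrow C'\in\mathbb{E}^c$. *)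

(* Defs.v *)
From mathcomp Require Import all_boot.
Set Implicit Arguments. Unset Strict Implicit. Unset Printing Implicit Defensive.

(* A directed mixed graph on a finite vertex type: directed edges [dir x y]
   means x -> y (self-loops and cycles allowed); bidirected edges [bi] form a
   symmetric relation (x <-> y is the same edge as y <-> x). *)
Record dmg (V : finType) := DMG {
  dir : rel V;
  bi : rel V;
  bi_sym : symmetric bi }.

Definition cluster (V : finType) (P : {set {set V}}) := {C : {set V} | C \in P}.

Definition compatible (V : finType) (P : {set {set V}})
    (G : dmg V) (Gc : dmg (cluster P)) : Prop :=
  forall Ci Cj : cluster P,
    dir Gc Ci Cj = [exists x in val Ci, exists y in val Cj, dir G x y] /\
    bi Gc Ci Cj = [exists x in val Ci, exists y in val Cj, bi G x y].

Definition int_dir (T : finType) (G : dmg T) (D : {set T}) : rel T :=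
  fun x y => dir G x y && (y \notin D).
Definition int_bi (T : finType) (G : dmg T) (D : {set T}) : rel T :=
  fun x y => [&& bi G x y, x \notin D & y \notin D].
Lemma int_bi_sym (T : finType) (G : dmg T) (D : {set T}) :
  symmetric (int_bi G D).
Proof. by move=> x y; rewrite /int_bi (bi_sym G); case: (x \in D); case: (y \in D); rewrite ?andbF. Qed.
Definition intervene (T : finType) (G : dmg T) (D : {set T}) : dmg T :=
  DMG (int_dir G D) (@int_bi_sym T G D).

Definition max_dir (V : finType) (P : {set {set V}}) (Gc : dmg (cluster P)) : rel V :=
  fun x y => [exists Ci : cluster P, exists Cj : cluster P,
                [&& x \in val Ci, y \in val Cj & dir Gc Ci Cj]].
Definition max_bi (V : finType) (P : {set {set V}}) (Gc : dmg (cluster P)) : rel V :=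
  fun x y => [exists Ci : cluster P, exists Cj : cluster P,
                [&& x \in val Ci, y \in val Cj & bi Gc Ci Cj]].
Lemma max_bi_sym (V : finType) (P : {set {set V}}) (Gc : dmg (cluster P)) :
  symmetric (max_bi Gc).
Proof.
move=> x y; apply/existsP/existsP => -[Ci /existsP [Cj /and3P [h1 h2 h3]]];
  exists Cj; apply/existsP; exists Ci; by rewrite h1 h2 (bi_sym Gc).
Qed.
Definition maxdmg (V : finType) (P : {set {set V}}) (Gc : dmg (cluster P)) : dmg V :=
  DMG (max_dir Gc) (@max_bi_sym V P Gc).

(* Main.v *)
Require Import Defs.
From mathcomp Require Import all_boot.

Lemma key {V : finType} {P : {set {set V}}} (hP : partition P [set: V])
  (CA : {set cluster P}) {Cj : cluster P} {y : V} :
  y \in val Cj -> (y \in \bigcup_(C in CA) val C) = (Cj \in CA).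
Proof.
move=> yC; apply/bigcupP/idP.
- case=> C hC yC'.
  have tP := partition_trivIset hP.
  have e : C = Cj.
    apply: val_inj.
    by rewrite -(def_pblock tP (valP C) yC') (def_pblock tP (valP Cj) yC).
  by rewrite -e.
- by move=> h; exists Cj.
Qed.

Theorem mainTheorem6 (V : finType) (P : {set {set V}})
    (hP : partition P [set: V])
    (Gc : dmg (cluster P)) (G : dmg V) (hG : compatible G Gc)
    (CA : {set cluster P}) :
  let A := \bigcup_(C in CA) val C in
  compatible (intervene G A) (intervene Gc CA) /\
  (forall x y : V,
     dir (intervene (maxdmg Gc) A) x y = dir (maxdmg (intervene Gc CA)) x y) /\
  (forall x y : V,
     bi (intervene (maxdmg Gc) A) x y = bi (maxdmg (intervene Gc CA)) x y).
Proof.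
move=> A; split; [|split].
- move=> Ci Cj; have [hd hb] := hG Ci Cj; rewrite /= /int_dir /int_bi hd hb; split.
  + apply/andP/existsP.
    * case=> /existsP [x /andP [xC /existsP [y /andP [yC e]]]] n.
      exists x; rewrite xC /=; apply/existsP; exists y.
      by rewrite yC e /= /A (key hP CA yC).
    * case=> x /andP [xC /existsP [y /and3P [yC e n]]].
      rewrite /A (key hP CA yC) in n; split => //.
      by apply/existsP; exists x; rewrite xC; apply/existsP; exists y; rewrite yC.
  + apply/and3P/existsP.
    * case=> /existsP [x /andP [xC /existsP [y /andP [yC e]]]] n1 n2.
      exists x; rewrite xC /=; apply/existsP; exists y.
      by rewrite yC e /= /A (key hP CA yC) (key hP CA xC) n1 n2.
    * case=> x /andP [xC /existsP [y /andP [yC /and3P [e n1 n2]]]].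
      rewrite /A (key hP CA yC) in n2; rewrite /A (key hP CA xC) in n1.
      split => //.
      by apply/existsP; exists x; rewrite xC; apply/existsP; exists y; rewrite yC.
- move=> x y; rewrite /= /int_dir /max_dir /=.
  apply/andP/existsP.
  + case=> /existsP [Ci /existsP [Cj /and3P [xC yC e]]] n.
    exists Ci; apply/existsP; exists Cj; rewrite xC yC /= /int_dir e /=.
    by rewrite -(key hP CA yC).
  + case=> Ci /existsP [Cj /and3P [xC yC /andP [e n]]].
    split; last by rewrite /A (key hP CA yC).
    by apply/existsP; exists Ci; apply/existsP; exists Cj; rewrite xC yC e.
- move=> x y; rewrite /= /int_bi /max_bi /=.
  apply/and3P/existsP.
  + case=> /existsP [Ci /existsP [Cj /and3P [xC yC e]]] n1 n2.
    exists Ci; apply/existsP; exists Cj; rewrite xC yC /= /int_bi e /=.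
    by rewrite -(key hP CA yC) -(key hP CA xC) n1 n2.
  + case=> Ci /existsP [Cj /and3P [xC yC /and3P [e n1 n2]]].
    split; [|by rewrite /A (key hP CA xC)|by rewrite /A (key hP CA yC)].
    by apply/existsP; exists Ci; apply/existsP; exists Cj; rewrite xC yC e.
Qed.
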